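(* Let $K,n\in\mathbb{N}^*$ and $\mu\in H^3((0,1),\mathbb{R})$ with $\sum_jj^{4n}|c_j|<\infty$ and $A^n_K\neq0$. There exists $T^*>0$ such that for every $T\in(0,T^* )$ and every real $s\in L^2(0,T)$, $-\operatorname{sign}(A^n_K)Q_n(s)\ge\frac{|A^n_K|}4\int_0^Ts(t)^2dt$, where $$Q_n(s)=-A^n_K\int_0^Ts(t)^2\cos[(\lambda_K-\lambda_1)(t-T)]dt+\int_0^Ts(t)\int_0^ts(\tau)k_n(t,\tau)d\tau dt,$$ $$k_n(t,\tau)=(-1)^{n+1}\sum_{j\ge1}(\lambda_K-\lambda_j)^n(\lambda_j-\lambda_1)^nc_j\sin\big(\lambda_K(t-T)+\lambda_j(\tau-t)+\lambda_1(T-\tau)\big).$$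
   Context: $\varphi_j=\sqrt2\sin(j\pi x)$, $\lambda_j=(j\pi)^2$, $\langle f,g\rangle=\int_0^1f\bar g$, $c_j=\langle\mu\varphi_1,\varphi_j\rangle\langle\mu\varphi_K,\varphi_j\rangle$, $A^n_K=(-1)^{n-1}\sum_{j}(\lambda_j-\frac{\lambda_1+\lambda_K}2)(\lambda_K-\lambda_j)^{n-1}(\lambda_j-\lambda_1)^{n-1}c_j$. *)

(* Defs.v *)
From HB Require Import structures.
From mathcomp Require Import all_boot all_order all_algebra.
From mathcomp Require Import all_classical all_reals all_analysis.
Set Implicit Arguments. Unset Strict Implicit. Unset Printing Implicit Defensive.
Import Order.TTheory GRing.Theory Num.Theory.
Import numFieldNormedType.Exports.
Local Open Scope classical_set_scope.
Local Open Scope ring_scope.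

Section Defs.
Variable R : realType.
Notation leb := (@lebesgue_measure R).

Definition integ (a b : R) (f : R -> R) : R := Rintegral leb `[a, b] f.

Definition L2_on (a b : R) (s : R -> R) : Prop :=
  measurable_fun `[a, b] s /\
  (\int[leb]_(x in `[a, b]) ((s x) ^+ 2)%:E < +oo)%E.

(** mu in H^3((0,1),R): a.e. on (0,1), mu = quadratic + triple primitive
    of some g in L^2(0,1) (i.e. the weak third derivative of mu is g) *)
Definition H3_01 (mu : R -> R) : Prop :=
  exists (a b c : R) (g : R -> R), L2_on 0 1 g /\
    {ae leb, forall x : R, x \in `]0, 1[ ->
       mu x = a + b * x + c * x ^+ 2
              + integ 0 x (fun t => (x - t) ^+ 2 / 2 * g t)}.

Definition phi (j : nat) (x : R) : R := Num.sqrt 2 * sin (j%:R * pi * x).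

Definition lam (j : nat) : R := (j%:R * pi) ^+ 2.

Definition ip (f g : R -> R) : R := integ 0 1 (fun x => f x * g x).

Definition cc (mu : R -> R) (K j : nat) : R :=
  ip (fun x => mu x * phi 1 x) (phi j) * ip (fun x => mu x * phi K x) (phi j).

Definition rseries (F : nat -> R) : R := limn (fun N => \sum_(1 <= j < N) F j).

Definition AnK (mu : R -> R) (K n : nat) : R :=
  (-1) ^+ n.-1 * rseries (fun j =>
     (lam j - (lam 1 + lam K) / 2) * (lam K - lam j) ^+ n.-1
     * (lam j - lam 1) ^+ n.-1 * cc mu K j).

Definition kn (mu : R -> R) (K n : nat) (T t tau : R) : R :=
  (-1) ^+ n.+1 * rseries (fun j =>
     (lam K - lam j) ^+ n * (lam j - lam 1) ^+ n * cc mu K j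
     * sin (lam K * (t - T) + lam j * (tau - t) + lam 1 * (T - tau))).

Definition Qn (mu : R -> R) (K n : nat) (T : R) (s : R -> R) : R :=
  - AnK mu K n * integ 0 T (fun t => s t ^+ 2 * cos ((lam K - lam 1) * (t - T)))
  + integ 0 T (fun t => s t * integ 0 t (fun tau => s tau * kn mu K n T t tau)).

End Defs.

(* Main.v *)
Require Import Defs.
From HB Require Import structures.
From mathcomp Require Import all_boot all_order all_algebra.
From mathcomp Require Import all_classical all_reals all_analysis.
From mathcomp Require Import lra ring measurable_realfun.
Import Order.TTheory GRing.Theory Num.Theory.
Import numFieldNormedType.Exports.
Local Open Scope classical_set_scope.
Local Open Scope ring_scope.

Section NN.
Context d (T : measurableType d) (R : realType) (mu : {measure set T -> \bar R}).
Import HBNNSimple.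

Definition NN (g : T -> \bar R) := ereal_sup [set sintegral mu h |
  h in [set h : {nnsfun T >-> R} | forall x, ((h x)%:E <= g x)%E]].

Lemma NN_mono g1 g2 : (forall x, g1 x <= g2 x)%E -> (NN g1 <= NN g2)%E.
Proof.
move=> g12; apply: le_ereal_sup => _ [h hg <-]; exists h => // x.
exact: le_trans (hg x) (g12 x).
Qed.

Lemma NN_ge0 g : (forall x, 0 <= g x)%E -> (0 <= NN g)%E.
Proof.
by move=> g0; apply: ereal_sup_ubound; exists nnsfun0 => //; exact: sintegral0.
Qed.

Lemma integralNN D g : (forall x, D x -> 0 <= g x)%E ->
  (\int[mu]_(x in D) g x = NN (g \_ D))%E.
Proof. exact: ge0_integralE. Qed.

Lemma integral_NN D g : (\int[mu]_(x in D) g x = NN ((g \_ D)^\+) - NN ((g \_ D)^\-))%E.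
Proof. by []. Qed.

Lemma dom_Rint (D : set T) (f F : T -> R) :
  (\int[mu]_(x in D) (F x)%:E < +oo)%E ->
  (forall x, D x -> `|f x| <= F x) ->
  `|Rintegral mu D f| <= Rintegral mu D F.
Proof.
move=> Fint fF.
have F0 : forall x, D x -> 0 <= F x by move=> x /fF; apply: le_trans.
have E := (@integralNN D (fun x => (F x)%:E)).
rewrite E in Fint; last by move=> x /F0; rewrite lee_fin.
rewrite /Rintegral E; last by move=> x /F0; rewrite lee_fin.
rewrite integral_NN.
set c := NN _ in Fint *.
set a := NN (_^\+)%E.
set b := NN (_^\-)%E.
have ha : (0 <= a)%E /\ (a <= c)%E.
  split; first by apply: NN_ge0 => x; exact: funepos_ge0.
  apply: NN_mono => x; rewrite funeposE /patch.
  case: ifP => xD; first last. by rewrite /= maxxx.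
  have xD' : D x by move/set_mem: xD.
  rewrite ge_max !lee_fin (F0 _ xD') andbT.
  exact: le_trans (ler_norm _) (fF _ xD').
have hb : (0 <= b)%E /\ (b <= c)%E.
  split; first by apply: NN_ge0 => x; exact: funeneg_ge0.
  apply: NN_mono => x; rewrite funenegE /patch.
  case: ifP => xD; first last. by rewrite /= oppr0 maxxx.
  have xD' : D x by move/set_mem: xD.
  rewrite ge_max -EFinN !lee_fin (F0 _ xD') andbT.
  by have := fF _ xD'; rewrite ler_norml => /andP[] *; lra.
case: ha => a0 ac; case: hb => b0 bc.
have c0 : (0 <= c)%E by apply: le_trans a0 ac.
have cf : c \is a fin_num by rewrite ge0_fin_numE.
have af : a \is a fin_num by rewrite ge0_fin_numE // (le_lt_trans ac).
have bf : b \is a fin_num by rewrite ge0_fin_numE // (le_lt_trans bc).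
rewrite -(fineK af) -(fineK bf) -(fineK cf) in a0 ac b0 bc c0 *.
rewrite -EFinB /= ?lee_fin in a0 ac b0 bc c0 *.
rewrite ler_norml; apply/andP; split; lra.
Qed.
End NN.

Section C.
Variable R : realType.

Lemma cos_near0 : exists2 e : R, 0 < e & forall x, `|x| < e -> 1/2 <= cos x.
Proof.
have := @continuous_cos R 0 => /cvgrPdist_lt/(_ (1/2)).
have h : (0:R) < 1/2 by lra.
move=> /(_ h) /nbhs_ballP [e /= e0 He]; exists e => // x xe.
have := He x; rewrite /ball /= sub0r normrN => /(_ xe).
rewrite cos0 ltr_distlC => /andP[] *; lra.
Qed.

Lemma lam_bound (K j : nat) : (0 < j)%N ->
  `|lam R K - lam R j| * `|lam R j - lam R 1| <= 2 * pi ^+ 4 * (K%:R ^+ 2 + 1) * j%:R ^+ 4.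
Proof.
move=> j0; rewrite /lam.
have x1 : (1 : R) <= j%:R by rewrite ler1n.
have k0 : (0 : R) <= K%:R by [].
have p0 : (0 : R) < pi := pi_gt0 R.
set x := j%:R in x1 *; set k := K%:R in k0 *.
rewrite !exprMn ?expr1n ?mul1r.
set P := pi ^+ 2.
have P0 : 0 < P by rewrite exprn_gt0.
have x2 : 1 <= x ^+ 2 by rewrite expr_ge1.
have -> : pi ^+ 4 = P * P by rewrite /P -exprD.
have -> : x ^+ 4 = x ^+ 2 * x ^+ 2 by rewrite -exprD.
have k2 : 0 <= k ^+ 2 by rewrite sqr_ge0.
have h1 : `|k ^+ 2 * P - x ^+ 2 * P| <= P * (k ^+ 2 + 1) * x ^+ 2.
  have a1 : k ^+ 2 <= k ^+ 2 * x ^+ 2 by rewrite ler_peMr.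
  rewrite ler_norml; apply/andP; split; nra.
have h2 : `|x ^+ 2 * P - P| <= 2 * P * x ^+ 2.
  rewrite ler_norml; apply/andP; split; nra.
apply: le_trans (ler_pM _ _ h1 h2) _ => //.
rewrite le_eqVlt; apply/orP; left; apply/eqP; ring.
Qed.

Lemma rseries_series (F : nat -> R) :
  (fun N => \sum_(1 <= j < N) F j) = series (fun j => if (0 < j)%N then F j else 0).
Proof.
apply/funext; elim => [|N IH]; first by rewrite /series /= !big_geq.
have -> : series (fun j => if (0 < j)%N then F j else 0) N.+1 =
  series (fun j => if (0 < j)%N then F j else 0) N + (if (0 < N)%N then F N else 0).
  by rewrite /series /= big_nat_recr.
rewrite -IH; case: N {IH} => [|N]; first by rewrite !big_geq // addr0.
by rewrite big_nat_recr.
Qed.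

Lemma rseries_bound (F v : nat -> R) (C : R) :
  0 <= C -> (forall j, (0 < j)%N -> `|F j| <= C * v j) -> (forall j, 0 <= v j) ->
  (\sum_(1 <= j <oo) (v j)%:E < +oo)%E ->
  `|rseries F| <= C * fine (\sum_(1 <= j <oo) (v j)%:E)%E.
Proof.
move=> C0 Fv v0 vfin.
set S := (\sum_(1 <= j <oo) (v j)%:E)%E in vfin *.
have S0 : (0 <= S)%E by apply: nneseries_ge0 => *; rewrite lee_fin.
have Sf : S \is a fin_num by rewrite ge0_fin_numE.
have psum N : \sum_(1 <= j < N) v j <= fine S.
  by rewrite -lee_fin fineK // -sumEFin; apply: nneseries_lim_ge => *; rewrite lee_fin.
rewrite /rseries rseries_series.
set G := fun j => _.
have hb N : [normed series G] N <= C * fine S.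
  have -> : [normed series G] N = \sum_(1 <= j < N) `|F j|.
    have := congr1 (fun f => f N) (rseries_series (fun j => `|F j|)) => /= ->.
    rewrite /series /=; apply: eq_bigr => j _.
    by rewrite /G; case: ifP; rewrite ?normr0.
  apply: le_trans (_ : \sum_(1 <= j < N) C * v j <= _).
    by apply: ler_sum_nat => j /andP[j1 _]; exact: Fv.
  by rewrite -mulr_sumr ler_wpM2l.
have cn : cvgn [normed series G].
  apply: nondecreasing_is_cvgn.
    apply: nondecreasing_series => *; exact: normr_ge0.
  by exists (C * fine S) => _ [N _ <-]; exact: hb.
apply: le_trans (lim_series_norm cn) _.
by apply: limr_le => //; apply: nearW => N; exact: hb.
Qed.

Lemma kn_bound (K n : nat) (mu : R -> R) (T t tau : R) :
  (\sum_(1 <= j <oo) (((j ^ (4 * n))%:R * `|cc mu K j|)%:E) < +oo)%E ->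
  `|kn mu K n T t tau| <= (2 * pi ^+ 4 * (K%:R ^+ 2 + 1)) ^+ n *
     fine (\sum_(1 <= j <oo) (((j ^ (4 * n))%:R * `|cc mu K j|)%:E))%E.
Proof.
move=> hs; rewrite /kn normrM normrX normrN1 expr1n mul1r.
apply: rseries_bound => //.
- by rewrite exprn_ge0 // mulr_ge0 // ?addr_ge0 // mulr_ge0 // exprn_ge0 // pi_ge0.
- move=> j j0; move: (cc mu K j) => c.
  have s1 : `|sin (lam R K * (t - T) + lam R j * (tau - t) + lam R 1 * (T - tau))| <= 1.
    exact: sin_max.
  move: s1; set sn := sin _ => s1.
  rewrite !normrM !normrX natrX exprM -exprMn.
  apply: le_trans (_ : (`|lam R K - lam R j| * `|lam R j - lam R 1|) ^+ n * `|c| <= _).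
    by apply: ler_piMr => //; rewrite mulr_ge0 // exprn_ge0 // mulr_ge0.
  have p0 : (0:R) <= pi := pi_ge0 R.
  rewrite mulrA; apply: ler_wpM2r => //; rewrite -exprMn; apply: lerXn2r;
    rewrite ?nnegrE ?mulr_ge0 // ?exprn_ge0 // ?addr_ge0 //.
  exact: lam_bound.
Qed.
End C.

Theorem lemma5p2 (R : realType) (K n : nat) (mu : R -> R) :
  (0 < K)%N -> (0 < n)%N ->
  H3_01 mu ->
  (\sum_(1 <= j <oo) (((j ^ (4 * n))%:R * `|cc mu K j|)%:E) < +oo)%E ->
  AnK mu K n != 0 ->
  exists Tstar : R, 0 < Tstar /\
    forall T : R, 0 < T -> T < Tstar ->
    forall s : R -> R, L2_on 0 T s ->
      - Num.sg (AnK mu K n) * Qn mu K n T s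
        >= `|AnK mu K n| / 4 * integ 0 T (fun t => s t ^+ 2).
Proof.
move=> K0 n0 _ hsum A0.
set A := AnK mu K n in A0 *.
set M := (2 * pi ^+ 4 * (K%:R ^+ 2 + 1)) ^+ n *
     fine (\sum_(1 <= j <oo) (((j ^ (4 * n))%:R * `|cc mu K j|)%:E))%E.
have Mk : forall T t tau, `|kn mu K n T t tau| <= M by move=> *; exact: kn_bound.
have M0 : 0 <= M by apply: le_trans (Mk 0 0 0).
have [del del0 Hdel] := @cos_near0 R.
set L := `|lam R K - lam R 1| + 1.
have L0 : 0 < L by rewrite /L ltr_pwDr.
have Aa : 0 < `|A| by rewrite normr_gt0.
exists (Num.min (del / L) (`|A| / (4 * (M + 1)))); split.
  by rewrite lt_min divr_gt0 //= divr_gt0 // mulr_gt0 // ltr_pwDr.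
move=> T T0; rewrite lt_min => /andP[TdL TA] s [ms s2fin].
set D : set R := `[0, T]%classic.
have mD : measurable D by exact: measurable_itv.
have lebD : (@lebesgue_measure R) D = T%:E.
  by rewrite /D lebesgue_measure_itv /= lte_fin T0 oppr0 adde0.
have ms2 : measurable_fun D (fun t => s t ^+ 2) := measurable_realfun.measurable_funX 2 ms.
have is2 : (@lebesgue_measure R).-integrable D (EFin \o (fun t => s t ^+ 2)).
  apply/integrableP; split; first exact/measurable_EFinP.
  apply: le_lt_trans s2fin; rewrite le_eqVlt; apply/orP; left; apply/eqP.
  by apply: eq_integral => x _; rewrite /comp abse_EFin ger0_norm // sqr_ge0.
have icst c : (@lebesgue_measure R).-integrable D (EFin \o cst c).
  apply/integrableP; split; first exact/measurable_EFinP.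
  rewrite /= integral_cst // (_ : (_ * _)%E = (`|c| * T)%:E); first exact: ltry.
  by rewrite EFinM; congr (_ * _)%E; exact: lebD.
have intle (f g : R -> R) : measurable_fun D f ->
    (forall x, D x -> `|f x| <= `|g x|) ->
    (@lebesgue_measure R).-integrable D (EFin \o g) ->
    (@lebesgue_measure R).-integrable D (EFin \o f).
  move=> mf fg ig; eapply le_integrable; [exact: mD| | |exact: ig].
    exact/measurable_EFinP.
  by move=> x Dx; rewrite /comp !abse_EFin lee_fin fg.
have intD (f g : R -> R) : (@lebesgue_measure R).-integrable D (EFin \o f) ->
    (@lebesgue_measure R).-integrable D (EFin \o g) ->
    (@lebesgue_measure R).-integrable D (EFin \o (fun x => f x + g x)).
  move=> i1 i2; eapply eq_integrable; [exact: mD| |eapply integrableD; [exact: mD|exact: i1|exact: i2]].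
  by move=> x _; rewrite /comp EFinD.
have intZ (f : R -> R) k : (@lebesgue_measure R).-integrable D (EFin \o f) ->
    (@lebesgue_measure R).-integrable D (EFin \o (fun x => k * f x)).
  move=> i1; eapply eq_integrable; [exact: mD| |eapply integrableZl; [exact: mD|exact: i1]].
  by move=> x _; rewrite /comp EFinM.
have mabs : measurable_fun D (fun t => `|s t|).
  by eapply measurableT_comp; [exact: normr_measurable|exact: ms].
have iabs : (@lebesgue_measure R).-integrable D (EFin \o (fun t => `|s t|)).
  apply: (intle _ (fun t => s t ^+ 2 + 1)) => //; last exact: (intD _ _ is2 (icst 1)).
  move=> x _; rewrite normr_id [X in _ <= X]ger0_norm ?addr_ge0 ?sqr_ge0 //.
  rewrite -real_normK ?num_real //; set u := `|s x|.
  have : 0 <= u by exact: normr_ge0. nra.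
have icstR k : Rintegral (@lebesgue_measure R) D (fun _ => k) = k * T.
  rewrite /Rintegral integral_cst //.
  transitivity (fine (k%:E * T%:E)%E); last by [].
  by congr (fine (_ * _)%E); exact: lebD.
set b := integ 0 T (fun t => s t ^+ 2).
have b0 : 0 <= b by apply: Rintegral_ge0 => x _; exact: sqr_ge0.
set a := Rintegral (@lebesgue_measure R) D (fun t => `|s t|).
have a0 : 0 <= a by apply: Rintegral_ge0.
have CS : a ^+ 2 <= T * b.
  set c := a / T.
  have cT : c * T = a by rewrite /c divfK // gt_eqF.
  have h : Rintegral (@lebesgue_measure R) D (fun t => 2 * c * `|s t|) <=
           Rintegral (@lebesgue_measure R) D (fun t => s t ^+ 2 + c ^+ 2).
    apply: le_Rintegral => //; first exact: intZ.
      exact: (intD _ _ is2 (icst _)).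
    move=> x _; rewrite -[s x ^+ 2]real_normK ?num_real //; set u := `|s x|.
    have : 0 <= (u - c) ^+ 2 by exact: sqr_ge0. nra.
  rewrite RintegralZl // RintegralD // ?icstR in h; last exact: icst.
  have -> : a ^+ 2 = T * (c * a) by rewrite -cT; ring.
  apply: ler_wpM2l; first exact: ltW.
  have : 2 * c * a <= b + c ^+ 2 * T by exact: h.
  have -> : c ^+ 2 * T = c * a by rewrite -cT; ring.
  lra.
have finint (f : R -> R) : (@lebesgue_measure R).-integrable D (EFin \o f) ->
    (forall x, D x -> 0 <= f x) ->
    (\int[@lebesgue_measure R]_(x in D) (f x)%:E < +oo)%E.
  case/integrableP => _ h f0; apply: le_lt_trans h.
  rewrite le_eqVlt; apply/orP; left; apply/eqP; apply: eq_integral => x /set_mem Dx.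
  by rewrite /comp abse_EFin ger0_norm // f0.
have inD x : D x -> 0 <= x <= T.
  by rewrite /D /= in_itv.
have mcos : measurable_fun D (fun t => cos ((lam R K - lam R 1) * (t - T))).
  apply: measurable_funTS; apply: continuous_measurable_fun => x.
  apply: continuous_comp; last exact: continuous_cos.
  by apply: cvgM; [exact: cvg_cst|apply: cvgB; [exact: cvg_id|exact: cvg_cst]].
set I1 := integ 0 T (fun t => s t ^+ 2 * cos ((lam R K - lam R 1) * (t - T))).
have hI1 : b / 2 <= I1.
  have : Rintegral (@lebesgue_measure R) D (fun t => 1 / 2 * s t ^+ 2) <= I1.
    apply: le_Rintegral => //; first exact: intZ.
      apply: (intle _ (fun t => s t ^+ 2)) => //.
        by eapply measurable_funM; [exact: ms2|exact: mcos].
      move=> x _; rewrite normrM [X in _ <= X]ger0_norm ?sqr_ge0 //.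
      rewrite ger0_norm ?sqr_ge0 //; apply: ler_piMr; first exact: sqr_ge0.
      exact: cos_max.
    move=> x /inD /andP[x0 xT].
    have hc : 1 / 2 <= cos ((lam R K - lam R 1) * (x - T)).
      apply: Hdel; rewrite normrM.
      apply: (le_lt_trans (y := `|lam R K - lam R 1| * T)).
        apply: ler_wpM2l => //; rewrite ler_norml; apply/andP; split; lra.
      apply: (le_lt_trans (y := L * T)).
        by apply: ler_wpM2r; [exact: ltW|rewrite /L lerDl].
      by rewrite mulrC -ltr_pdivlMr.
    have := sqr_ge0 (s x); nra.
  rewrite RintegralZl // div1r mulrC; apply: le_trans; exact: lexx.
have iMs : (@lebesgue_measure R).-integrable D (EFin \o (fun t => M * `|s t|)).
  exact: intZ.
have hg t : D t -> `|integ 0 t (fun tau => s tau * kn mu K n T t tau)| <= M * a.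
  move=> /inD /andP[t0 tT].
  have -> : integ 0 t (fun tau => s tau * kn mu K n T t tau) =
      Rintegral (@lebesgue_measure R) D
        (patch (fun=> 0) (`[0, t]%classic : set R) (fun tau => s tau * kn mu K n T t tau)).
    have E := Rintegral_mkcondr (@lebesgue_measure R) D (`[0, t]%classic : set R)
      (fun tau => s tau * kn mu K n T t tau).
    rewrite setIidr in E; first exact: E.
    move=> x /=; rewrite in_itv /= => /andP[x0 xt]; rewrite /D /= in_itv /=; apply/andP; split; lra.
  set g := patch _ _ _.
  have key : `|Rintegral (@lebesgue_measure R) D g| <=
      Rintegral (@lebesgue_measure R) D (fun tau => M * `|s tau|).
    apply: dom_Rint.
    - by apply: finint => // x _; rewrite mulr_ge0.
    - move=> x _; rewrite /g /patch; case: ifP => _.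
        by rewrite normrM mulrC; apply: ler_wpM2r => //; exact: Mk.
      by rewrite normr0 mulr_ge0.
  apply: le_trans key _.
  by rewrite RintegralZl.
set I2 := integ 0 T (fun t => s t * integ 0 t (fun tau => s tau * kn mu K n T t tau)).
have hI2 : `|I2| <= (M * a) * a.
  have key : `|I2| <=
      Rintegral (@lebesgue_measure R) D (fun t => (M * a) * `|s t|).
    apply: dom_Rint.
    - apply: finint; last by move=> x _; rewrite mulr_ge0 // mulr_ge0.
      exact: (intZ (fun t => `|s t|) (M * a) iabs).
    - move=> x Dx; rewrite normrM mulrC; apply: ler_wpM2r => //; exact: hg.
  apply: le_trans key _.
  by rewrite RintegralZl.
have MTA : M * T <= `|A| / 4.
  have h1 : T * (4 * (M + 1)) < `|A| by rewrite -ltr_pdivlMr // mulr_gt0 // ltr_pwDr.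
  nra.
rewrite /Qn -/I1 -/I2 -/A.
have hA := normrEsg A.
case: (ltrgtP A 0) => hA0.
- rewrite ltr0_sg // in hA *; rewrite ltr0_norm // in MTA *.
  have : `|I2| <= - A / 4 * b by nra.
  rewrite ler_norml => /andP[? ?]; nra.
- rewrite gtr0_sg // in hA *; rewrite gtr0_norm // in MTA *.
  have : `|I2| <= A / 4 * b by nra.
  rewrite ler_norml => /andP[? ?]; nra.
- by rewrite hA0 eqxx in A0.
Qed.
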